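(* Let $M$ be a model of $\mathrm{AA}_0$. The following are equivalent: (i) $(M,\le)$ is linearly ordered; (ii) there is no $x\in M$ with $0<x<1$; (iii) for every $x\in M$, either $x=0$ or $|x|=1$; (iv) $M$ is a model of $\mathrm{PA}^-$.
   Context: Structures are complete metric spaces $(M,d)$ of diameter at most $1$ in the language $L=\{+,\cdot,\wedge,\vee,0,1\}$, all operations $1$-Lipschitz (sum metric on products), $d$ the only relation symbol; conditions are written with affine formulas (built from $1$ and $d(t_1,t_2)$ using $+$, scalar multiplication, $\sup$, $\inf$) and free variables are universally quantified. Notation: $|x|=d(x,0)$; $x\le y$ means $x\wedge y=x$; $x<y$ means $x\le y$ and $x\ne y$; $nx$ and $x^n$ are iterated sums/products. $\mathrm{AA}_0$ is the set of conditions: (A1) the identities of the nonnegative part of a lattice-ordered commutative ring with identity (commutative semiring axioms for $+,\cdot,0,1$, lattice axioms for $\wedge,\vee$, distributivity of $+$ and $\cdot$ over $\wedge,\vee$, and $0\le x$); (A2) $\inf_y d(x,(x\wedge y)+1)=1-|x|$ and $x\le x^2$; (A3) $d(x+z,y+z)=d(x,y)$; (A4) $d(y,z)\le d(xy,xz)+1-|x|$; (A5) $d(xy,xz)=d(x^ny,x^nz)\le d(y,z)$; (A6) $d(nx,ny)=d(x^n,y^n)=d(x,y)$ for $n\ge1$; (A7) $|x\wedge y|+|x\vee y|=|x|+|y|$; (A8) $|xy+z|=|(x\wedge y)+z|$; (A9) $|x+y+z|=|(x\vee y)+z|$; (A10) $\inf_t d((x\wedge y)+t,y)=0$. $\mathrm{PA}^-$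 is the first-order theory (models taken with the discrete metric) of nonnegative parts of lattice-ordered commutative rings with identity whose order is linear and discrete. *)

(* Defs.v *)
From HB Require Import structures.
From mathcomp Require Import all_boot all_order all_algebra.
From Stdlib Require Import Rdefinitions.
From mathcomp Require Import Rstruct.
Set Implicit Arguments. Unset Strict Implicit. Unset Printing Implicit Defensive.
Import Order.TTheory GRing.Theory Num.Theory.
Local Open Scope ring_scope.

Record LStruct := {
  car :> Type;
  dist : car -> car -> R;
  add : car -> car -> car;
  mul : car -> car -> car;
  meet : car -> car -> car;
  join : car -> car -> car;
  zeroL : car;
  oneL : car }.
Arguments add : clear implicits.
Arguments mul : clear implicits.
Arguments meet : clear implicits.
Arguments join : clear implicits.

Section Defs.
Variable M : LStruct.

Definition absv (x : M) : R := dist x (zeroL M).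
Definition leM (x y : M) : Prop := meet M x y = x.
Definition ltM (x y : M) : Prop := leM x y /\ x <> y.

(* iterated operation with k+1 copies of x:  rep op x k = x op (x op ... x).
   So n x (resp. x^n) for n >= 1 is  rep add x (n-1)  (resp. rep mul x (n-1)). *)
Fixpoint rep (op : M -> M -> M) (x : M) (k : nat) : M :=
  match k with O => x | S k' => op x (rep op x k') end.

Definition is_inf (f : M -> R) (v : R) : Prop :=
  (forall y, v <= f y) /\ (forall e : R, 0 < e -> exists y, f y < v + e).

Definition lipschitz2 (op : M -> M -> M) : Prop :=
  forall x y x' y', dist (op x y) (op x' y') <= dist x x' + dist y y'.

Definition metric_structure : Prop :=
  (forall x y : M, dist x y = 0 <-> x = y) /\
  (forall x y : M, dist x y = dist y x) /\
  (forall x y z : M, dist x z <= dist x y + dist y z) /\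
  (forall x y : M, dist x y <= 1) /\
  (forall u : nat -> M,
      (forall e : R, 0 < e -> exists N : nat, forall m n : nat, leq N m -> leq N n ->
           dist (u m) (u n) < e) ->
      exists l, forall e : R, 0 < e -> exists N : nat, forall n : nat, leq N n ->
           dist (u n) l < e) /\
  lipschitz2 (add M) /\ lipschitz2 (mul M) /\ lipschitz2 (meet M) /\
  lipschitz2 (join M).

Definition A1 : Prop :=
  (forall x y z, add M (add M x y) z = add M x (add M y z)) /\
  (forall x y, add M x y = add M y x) /\
  (forall x, add M x (zeroL M) = x) /\
  (forall x y z, mul M (mul M x y) z = mul M x (mul M y z)) /\
  (forall x y, mul M x y = mul M y x) /\
  (forall x, mul M x (oneL M) = x) /\
  (forall x, mul M x (zeroL M) = zeroL M) /\
  (forall x y z, mul M x (add M y z) = add M (mul M x y) (mul M x z)) /\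
  (forall x y z, meet M (meet M x y) z = meet M x (meet M y z)) /\
  (forall x y z, join M (join M x y) z = join M x (join M y z)) /\
  (forall x y, meet M x y = meet M y x) /\
  (forall x y, join M x y = join M y x) /\
  (forall x, meet M x x = x) /\
  (forall x, join M x x = x) /\
  (forall x y, meet M x (join M x y) = x) /\
  (forall x y, join M x (meet M x y) = x) /\
  (forall x y z, add M x (meet M y z) = meet M (add M x y) (add M x z)) /\
  (forall x y z, add M x (join M y z) = join M (add M x y) (add M x z)) /\
  (forall x y z, mul M x (meet M y z) = meet M (mul M x y) (mul M x z)) /\
  (forall x y z, mul M x (join M y z) = join M (mul M x y) (mul M x z)) /\
  (forall x, leM (zeroL M) x).

Definition AA0 : Prop :=
  A1 /\
  (* (A2) *)
  (forall x, is_inf (fun y => dist x (add M (meet M x y) (oneL M))) (1 - absv x)) /\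
  (forall x, leM x (mul M x x)) /\
  (* (A3) *)
  (forall x y z, dist (add M x z) (add M y z) = dist x y) /\
  (* (A4) *)
  (forall x y z, dist y z <= dist (mul M x y) (mul M x z) + 1 - absv x) /\
  (* (A5), n = k+1 >= 1 *)
  (forall x y z k, dist (mul M x y) (mul M x z)
                   = dist (mul M (rep (mul M) x k) y) (mul M (rep (mul M) x k) z)) /\
  (forall x y z k, dist (mul M (rep (mul M) x k) y) (mul M (rep (mul M) x k) z)
                   <= dist y z) /\
  (* (A6), n = k+1 >= 1 *)
  (forall x y k, dist (rep (add M) x k) (rep (add M) y k) = dist x y) /\
  (forall x y k, dist (rep (mul M) x k) (rep (mul M) y k) = dist x y) /\
  (* (A7) *)
  (forall x y, absv (meet M x y) + absv (join M x y) = absv x + absv y) /\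
  (* (A8) *)
  (forall x y z, absv (add M (mul M x y) z) = absv (add M (meet M x y) z)) /\
  (* (A9) *)
  (forall x y z, absv (add M (add M x y) z) = absv (add M (join M x y) z)) /\
  (* (A10) *)
  (forall x y, is_inf (fun t => dist (add M (meet M x y) t) y) 0).

Definition model_AA0 : Prop := metric_structure /\ AA0.

(* A linearly ordered commutative ring
   with 1 <> 0 is an integral domain with a total order compatible with
   + and *, i.e. a MathComp realDomainType; lattice ops are min/max. *)
Definition discrete_metric : Prop :=
  forall x y : M, x <> y -> dist x y = 1.

Definition nonneg_part_of_discrete_lin_ring : Prop :=
  exists (K : realDomainType) (f : M -> K),
    injective f /\
    (forall r : K, 0 <= r -> exists x, f x = r) /\
    (forall x, 0 <= f x) /\
    f (zeroL M) = 0 /\ f (oneL M) = 1 /\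
    (forall x y, f (add M x y) = f x + f y) /\
    (forall x y, f (mul M x y) = f x * f y) /\
    (forall x y, f (meet M x y) = Num.min (f x) (f y)) /\
    (forall x y, f (join M x y) = Num.max (f x) (f y)) /\
    (forall r : K, 0 < r -> 1 <= r).

Definition model_PAminus : Prop :=
  discrete_metric /\ nonneg_part_of_discrete_lin_ring.

End Defs.

(* Main.v *)
From HB Require Import structures.
Require Import Defs.
From mathcomp Require Import all_boot all_order all_algebra.
From Stdlib Require Import Rdefinitions.
From mathcomp Require Import Rstruct.
From mathcomp Require Import lra.
From Stdlib Require Import Ring Setoid Morphisms.
From mathcomp.classical Require Import boolp.
Require Import Defs.
Import Order.TTheory GRing.Theory Num.Theory.
Local Open Scope ring_scope.
Set Implicit Arguments. Unset Strict Implicit. Unset Printing Implicit Defensive.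

Section Part1.
Variable M : LStruct.
Hypothesis HM : model_AA0 M.
Implicit Types x y z t u v s : M.

Local Infix "⊕" := (add M) (at level 50, left associativity).
Local Infix "⊛" := (mul M) (at level 40, left associativity).
Local Infix "⊓" := (meet M) (at level 45, left associativity).
Local Infix "⊔" := (join M) (at level 45, left associativity).
Local Notation "'O'" := (zeroL M).
Local Notation "'I'" := (oneL M).

Ltac destr := case: HM =>
  [[dz [ds [dt [dd [dc [la [lm [lmt lj]]]]]]]]
   [[addA [addC [add0 [mulA [mulC [mul1 [mul0 [mulD [meetA [joinA [meetC [joinC
     [meetI [joinI [meetJ [joinM [addMeet [addJoin [mulMeet [mulJoin le0]]]]]]]]]]]]]]]]]]]]
    [A2i [A2s [A3 [A4 [A5e [A5l [A6a [A6m [A7 [A8 [A9 A10]]]]]]]]]]]]].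

Lemma dz x y : dist x y = 0 <-> x = y. Proof. by destr. Qed.
Lemma ds x y : dist x y = dist y x. Proof. by destr. Qed.
Lemma dt x y z : dist x z <= dist x y + dist y z. Proof. by destr. Qed.
Lemma dd x y : dist x y <= 1. Proof. by destr. Qed.
Lemma la x y x' y' : dist (x ⊕ y) (x' ⊕ y') <= dist x x' + dist y y'. Proof. destr; exact: la. Qed.
Lemma lm x y x' y' : dist (x ⊛ y) (x' ⊛ y') <= dist x x' + dist y y'. Proof. destr; exact: lm. Qed.
Lemma lmt x y x' y' : dist (x ⊓ y) (x' ⊓ y') <= dist x x' + dist y y'. Proof. destr; exact: lmt. Qed.
Lemma addA x y z : x ⊕ y ⊕ z = x ⊕ (y ⊕ z). Proof. by destr. Qed.
Lemma addC x y : x ⊕ y = y ⊕ x. Proof. by destr. Qed.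
Lemma add0 x : x ⊕ O = x. Proof. by destr. Qed.
Lemma mulA x y z : x ⊛ y ⊛ z = x ⊛ (y ⊛ z). Proof. by destr. Qed.
Lemma mulC x y : x ⊛ y = y ⊛ x. Proof. by destr. Qed.
Lemma mul1 x : x ⊛ I = x. Proof. by destr. Qed.
Lemma mul0 x : x ⊛ O = O. Proof. by destr. Qed.
Lemma mulD x y z : x ⊛ (y ⊕ z) = x ⊛ y ⊕ x ⊛ z. Proof. by destr. Qed.
Lemma meetA x y z : x ⊓ y ⊓ z = x ⊓ (y ⊓ z). Proof. by destr. Qed.
Lemma meetC x y : x ⊓ y = y ⊓ x. Proof. by destr. Qed.
Lemma joinC x y : x ⊔ y = y ⊔ x. Proof. by destr. Qed.
Lemma meetI x : x ⊓ x = x. Proof. by destr. Qed.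
Lemma joinM x y : x ⊔ (x ⊓ y) = x. Proof. by destr. Qed.
Lemma addMeet x y z : x ⊕ (y ⊓ z) = (x ⊕ y) ⊓ (x ⊕ z). Proof. by destr. Qed.
Lemma mulMeet x y z : x ⊛ (y ⊓ z) = (x ⊛ y) ⊓ (x ⊛ z). Proof. by destr. Qed.
Lemma le0 x : leM O x. Proof. by destr. Qed.
Lemma A2i x : is_inf (fun y => dist x ((x ⊓ y) ⊕ I)) (1 - absv x). Proof. by destr. Qed.
Lemma A2s x : leM x (x ⊛ x). Proof. by destr. Qed.
Lemma A3 x y z : dist (x ⊕ z) (y ⊕ z) = dist x y. Proof. by destr. Qed.
Lemma A4 x y z : dist y z <= dist (x ⊛ y) (x ⊛ z) + 1 - absv x. Proof. by destr. Qed.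
Lemma A7 x y : absv (x ⊓ y) + absv (x ⊔ y) = absv x + absv y. Proof. by destr. Qed.
Lemma A8 x y z : absv (x ⊛ y ⊕ z) = absv ((x ⊓ y) ⊕ z). Proof. by destr. Qed.
Lemma A10 x y : is_inf (fun t => dist ((x ⊓ y) ⊕ t) y) 0. Proof. by destr. Qed.

Lemma dxx x : dist x x = 0. Proof. by apply/dz. Qed.
Lemma abs0 : absv O = 0. Proof. exact: dxx. Qed.
Lemma dge0 x y : 0 <= dist x y.
Proof. have := dt x y x; rewrite dxx (ds y x); lra. Qed.
Lemma add0l x : O ⊕ x = x. Proof. by rewrite addC add0. Qed.
Lemma meet0 x : O ⊓ x = O. Proof. exact: le0. Qed.
Lemma distadd x y z : dist (z ⊕ x) (z ⊕ y) = dist x y.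
Proof. by rewrite (addC z x) (addC z y) A3. Qed.
Lemma dist_addr x t : dist x (x ⊕ t) = absv t.
Proof. by rewrite -{1}(add0 x) distadd ds. Qed.
Lemma le_anti x y : leM x y -> leM y x -> x = y.
Proof. by rewrite /leM => h1 h2; rewrite -h1 meetC h2. Qed.
Lemma le_addr x t : leM x (x ⊕ t).
Proof. by rewrite /leM -{1}(add0 x) -addMeet meet0 add0. Qed.
Lemma inf_lt (f : M -> R) (v e : R) : is_inf f v -> 0 < e -> exists y, f y < v + e.
Proof. by case=> _ h; apply: h. Qed.
Lemma inf_le (f : M -> R) (v : R) y : is_inf f v -> v <= f y.
Proof. by case=> h _; apply: h. Qed.

Lemma i_ii : (forall x y : M, leM x y \/ leM y x) ->
  ~ (exists x : M, ltM O x /\ ltM x I).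
Proof.
move=> lin [x [[_ x0] [x1 x1']]].
have xx : x ⊛ x = x.
  apply: le_anti; last exact: A2s.
  by rewrite /leM -{3}(mul1 x) -mulMeet x1.
have key : forall e, 0 < e -> absv x < e \/ dist x I < e + e.
  move=> e e0; have [t ht] := inf_lt (A10 x I) e0.
  rewrite /= x1 add0r in ht.
  have h1 : absv (x ⊛ t) < e.
    have := lm x (x ⊕ t) x I; rewrite dxx add0r mulD xx mul1.
    move=> h; apply: le_lt_trans ht; move: h; rewrite -(dist_addr x) ds addC; exact: id.
  have := A8 x t O; rewrite !add0 => h2; rewrite h2 in h1.
  case: (lin x t) => h; [left; by rewrite -h | right].
  have ht' : x ⊓ t = t by rewrite meetC.
  have := dt x (x ⊕ t) I; rewrite dist_addr; rewrite ht' in h1; lra.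
have ax : 0 < absv x.
  have := dge0 x O; rewrite /absv le_eqVlt => /orP[/eqP h|//].
  by case: x0; symmetry; apply/dz.
have bx : 0 < dist x I.
  have := dge0 x I; rewrite le_eqVlt => /orP[/eqP h|//].
  by case: x1'; apply/dz.
have [hab|hab] := lerP (absv x) (dist x I / 2).
- have := key _ ax; lra.
- have : 0 < dist x I / 2 by lra.
  move/key; lra.
Qed.


Lemma meetxI_le x : leM (x ⊓ I) I.
Proof. by rewrite /leM meetA meetI. Qed.

Lemma ii_iii : ~ (exists x : M, ltM O x /\ ltM x I) ->
  forall x : M, x = O \/ absv x = 1.
Proof.
move=> nii x.
have : x ⊓ I = O \/ x ⊓ I = I.
  case: (pselect (x ⊓ I = O)) => h0; first by left.
  case: (pselect (x ⊓ I = I)) => h1; first by right.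
  case: nii; exists (x ⊓ I); split; split.
  - exact: le0.
  - by move=> h; apply: h0.
  - exact: meetxI_le.
  - exact: h1.
case=> h.
- left; apply/dz; have := A8 x I O; rewrite mul1 h !add0 abs0; exact.
- right; apply/eqP; rewrite eq_le; apply/andP; split; first exact: dd.
  rewrite -subr_le0; apply/ler_addgt0Pr => e e0.
  have e2 : 0 < e / 2 by lra.
  have [t ht] := inf_lt (A10 I x) e2.
  rewrite /= meetC h add0r in ht.
  have := inf_le t (A2i x); rewrite /=.
  have h3 := dt x (t ⊕ I) ((x ⊓ t) ⊕ I).
  have : dist (t ⊕ I) ((x ⊓ t) ⊕ I) <= dist (t ⊕ I) x.
    rewrite A3 ds.
    have := lmt x t (t ⊕ I) t; rewrite dxx addr0.
    have -> : (t ⊕ I) ⊓ t = t by rewrite meetC; apply: le_addr.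
    by rewrite (ds (t ⊕ I) x).
  rewrite (ds x (t ⊕ I)) in h3; rewrite (addC I t) in ht.
  move=> h4 h5. rewrite add0r. have h6 : dist x (x ⊓ t ⊕ I) < e by lra. exact: le_trans h5 (ltW h6).
Qed.

Lemma idem x : leM x I -> x ⊛ x = x.
Proof.
move=> x1; apply: le_anti; last exact: A2s.
by rewrite /leM -{3}(mul1 x) -mulMeet x1.
Qed.

Lemma cancel x y z : x ⊕ z = y ⊕ z -> x = y.
Proof. by move=> h; apply/dz; rewrite -(A3 x y z) h dxx. Qed.

Lemma absv_dist_m m a : dist (m ⊕ a) m = absv a.
Proof. by rewrite ds dist_addr. Qed.

Section III.
Hypothesis H3 : forall x : M, x = O \/ absv x = 1.

Lemma absv_small x : absv x < 1 -> x = O.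
Proof. by case: (H3 x) => // ->; rewrite ltxx. Qed.

Lemma abs01 x : absv x = 0 \/ absv x = 1.
Proof. by case: (H3 x) => [->|]; [left; exact: abs0 | right]. Qed.

Lemma st0 s t : s ⊓ t = O -> s = O \/ t = O.
Proof.
move=> h; have := A7 s t; rewrite h abs0 add0r.
have := dd (s ⊔ t) O; rewrite -/(absv _).
case: (H3 s) => [->|hs]; first by left.
case: (H3 t) => [->|ht]; first by right.
rewrite hs ht => h1 h2.
rewrite h2 in h1.
clear H3.
by move: h1; rewrite gerDl ler10.
Qed.

Lemma approx u v e : 0 < e -> e <= 1/4 -> dist u v < 4 * e \/ 1 - 4 * e < dist u v.
Proof.
move=> e0 e4.
have [t ht] := inf_lt (A10 u v) e0.
have [s hs] := inf_lt (A10 v u) e0.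
rewrite /= add0r in ht hs; rewrite meetC in hs.
set m := u ⊓ v in ht hs.
have hst : s ⊓ t = O.
  apply: absv_small; rewrite -(absv_dist_m m) addMeet.
  have := lmt (m ⊕ s) (m ⊕ t) u v; rewrite -/m => h.
  apply: le_lt_trans h _.
  have : dist (m ⊕ s) u + dist (m ⊕ t) v < e + e by apply: ltrD.
  move=> h'; apply: lt_le_trans h' _; lra.
have h1 := dt u (m ⊕ s) v.
have h2 := dt (m ⊕ s) (m ⊕ t) v.
have h3 := dt (m ⊕ s) u (m ⊕ t).
have h4 := dt u v (m ⊕ t).
rewrite distadd in h2 h3.
rewrite (ds u (m ⊕ s)) in h1.
rewrite (ds v (m ⊕ t)) in h4.
have : dist s t = 0 \/ dist s t = 1.
  case: (st0 hst) => ->; [rewrite ds|]; exact: abs01.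
case=> hd; rewrite hd in h2 h3; [left|right]; lra.
Qed.

Lemma D1 u v : dist u v = 0 \/ dist u v = 1.
Proof.
set d := dist u v.
have d0 : 0 <= d := dge0 u v.
have d1 : d <= 1 := dd u v.
case: (pselect (d = 0)) => h0; first by left.
case: (pselect (d = 1)) => h1; first by right.
exfalso.
have d0' : 0 < d by rewrite lt_neqAle d0 andbT eq_sym; apply/eqP.
have d1' : d < 1 by rewrite lt_neqAle d1 andbT; apply/eqP.
have [hd|hd] := lerP d (1 - d).
- have e0 : 0 < d / 4 by lra.
  have e4 : d / 4 <= 1/4 by lra.
  case: (approx u v e0 e4); rewrite -/d; lra.
- have e0 : 0 < (1 - d) / 4 by lra.
  have e4 : (1 - d) / 4 <= 1/4 by lra.
  case: (approx u v e0 e4); rewrite -/d; lra.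
Qed.

Lemma Ddisc u v : u <> v -> dist u v = 1.
Proof. by move=> h; case: (D1 u v) => // /dz. Qed.

Lemma exactA10 x y : exists t, (x ⊓ y) ⊕ t = y.
Proof.
have e0 := @ltr01 R.
have [t ht] := inf_lt (A10 x y) e0; exists t.
apply/dz; case: (D1 ((x ⊓ y) ⊕ t) y) => // h.
by move: ht; rewrite /= h add0r ltxx.
Qed.

Lemma iii_i : forall x y : M, leM x y \/ leM y x.
Proof.
move=> x y.
have [t ht] := exactA10 x y.
have [s hs] := exactA10 y x; rewrite meetC in hs.
set m := x ⊓ y in ht hs.
have : s ⊓ t = O.
  apply: (@cancel _ _ m); rewrite addC addMeet (addC O) add0 hs ht //.
case/st0 => h; [left | right].
- by rewrite /leM -/m -hs h add0.
- by rewrite /leM meetC -/m -ht h add0.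
Qed.

Lemma iii_ii : ~ (exists x : M, ltM O x /\ ltM x I).
Proof.
move=> [x [[_ x0] [x1 x1']]].
have [t ht] := exactA10 x I; rewrite x1 in ht.
have xx := idem x1.
have xt : x ⊛ t = O.
  apply: (@cancel _ _ x); rewrite addC add0l.
  by rewrite -{1}xx -mulD ht mul1.
have ax : absv x = 1 by case: (H3 x) => // h; case: x0.
have := A4 x t O; rewrite xt mul0 dxx ax add0r subrr => h.
have t0 : t = O.
  apply/dz; apply/eqP; rewrite eq_le h; exact: dge0.
by apply: x1'; rewrite -ht t0 add0.
Qed.

End III.
End Part1.

Lemma iv_i (M : LStruct) : model_PAminus M -> forall x y : M, leM x y \/ leM y x.
Proof.
move=> [_ [K [f [finj [_ [_ [_ [_ [_ [_ [fmeet _]]]]]]]]]]] x y.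
have [h|h] := leP (f x) (f y).
- left; apply: finj; rewrite fmeet; exact: min_l.
- right; apply: finj; rewrite /leM fmeet min_l //; exact: ltW.
Qed.

Lemma one_neq0 (M : LStruct) (HM : model_AA0 M) : oneL M <> zeroL M.
Proof.
move=> h; have := inf_le (zeroL M) (A2i HM (zeroL M)).
rewrite /= (meet0 HM) (add0l HM) h (dxx HM) (abs0 HM).
by rewrite RminusE R1E ?R0E subr0 ler10.
Qed.

Definition goodM (M : LStruct) : Prop :=
  model_AA0 M /\ (forall x : M, x = zeroL M \/ absv x = 1).

Section KDef.
Variable M : LStruct.
Local Infix "⊕" := (add M) (at level 50, left associativity).
Local Infix "⊛" := (mul M) (at level 40, left associativity).
Local Notation "'O'" := (zeroL M).
Local Notation "'I'" := (oneL M).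

Definition subM (x y : M) : M :=
  match pselect (exists t, x ⊕ t = y) with
  | left h => proj1_sig (cid h)
  | right _ => O end.
Definition normp (p : M * M) : M * M :=
  if pselect (leM p.2 p.1) then (subM p.2 p.1, O) else (O, subM p.1 p.2).
Definition isnorm (p : M * M) : Prop := p.1 = O \/ p.2 = O.
Lemma normp_isnorm p : isnorm (normp p).
Proof. by rewrite /normp; case: pselect => h; [right | left]. Qed.
Definition padd (p q : M * M) := (p.1 ⊕ q.1, p.2 ⊕ q.2).
Definition pmul (p q : M * M) := (p.1 ⊛ q.1 ⊕ p.2 ⊛ q.2, p.1 ⊛ q.2 ⊕ p.2 ⊛ q.1).
Definition pswap (p : M * M) := (p.2, p.1).
Lemma pswap_isnorm p : isnorm p -> isnorm (pswap p).
Proof. by case => h; [right | left]. Qed.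
Definition eqv (p q : M * M) := p.1 ⊕ q.2 = p.2 ⊕ q.1.
End KDef.

Definition Kt (M : LStruct) (H : goodM M) : Type := {p : M * M | isnorm p}.

Section KOps.
Variables (M : LStruct) (H : goodM M).
Local Notation K := (Kt H).
Definition mkK (p : M * M) : K := exist _ (normp p) (normp_isnorm p).
Definition zeroK : K := mkK (zeroL M, zeroL M).
Definition oneK : K := mkK (oneL M, zeroL M).
Definition addK (k l : K) : K := mkK (padd (sval k) (sval l)).
Definition mulK (k l : K) : K := mkK (pmul (sval k) (sval l)).
Definition oppK (k : K) : K := exist _ (pswap (sval k)) (pswap_isnorm (proj2_sig k)).
Definition fK (x : M) : K := mkK (x, zeroL M).
End KOps.

Section KLemmas.
Variables (M : LStruct) (H : goodM M).
Local Notation K := (Kt H).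
Let HM := proj1 H.
Let H3 := proj2 H.
Local Infix "⊕" := (add M) (at level 50, left associativity).
Local Infix "⊛" := (mul M) (at level 40, left associativity).
Local Infix "⊓" := (meet M) (at level 45, left associativity).
Local Notation "'O'" := (zeroL M).
Local Notation "'I'" := (oneL M).
Implicit Types x y z : M.
Implicit Types p q r : (M * M)%type.

Lemma Msrt : semi_ring_theory O I (add M) (mul M) eq.
Proof.
constructor.
- exact: add0l HM.
- exact: addC HM.
- by move=> a b c; rewrite (addA HM).
- by move=> n; rewrite (mulC HM) (mul1 HM).
- by move=> n; rewrite (mulC HM) (mul0 HM).
- exact: mulC HM.
- by move=> a b c; rewrite (mulA HM).
- by move=> n m p; rewrite (mulC HM) (mulD HM) !(mulC HM p).
Qed.
Add Ring Mring : Msrt.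


Lemma sum0 x y : x ⊕ y = O -> x = O.
Proof.
move=> h; apply: (le_anti HM); last exact: (le0 HM).
by have := le_addr HM x y; rewrite h.
Qed.

Lemma subM_spec x y : leM x y -> x ⊕ subM x y = y.
Proof.
move=> hxy; rewrite /subM; case: pselect => [h|[]].
- by case: (cid h).
- by have [t ht] := exactA10 HM H3 x y; exists t; rewrite -ht hxy.
Qed.

Lemma eqv_refl p : eqv p p.
Proof. by rewrite /eqv (addC HM). Qed.
Lemma eqv_sym p q : eqv p q -> eqv q p.
Proof. by rewrite /eqv => h; rewrite (addC HM) -h (addC HM). Qed.
Lemma eqv_trans p q r : eqv p q -> eqv q r -> eqv p r.
Proof.
rewrite /eqv => h1 h2; apply: (cancel HM (z := q.1 ⊕ q.2)).
transitivity ((p.1 ⊕ q.2) ⊕ (q.1 ⊕ r.2)); first ring.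
rewrite h1 h2; ring.
Qed.

Add Parametric Relation : (M * M)%type (@eqv M)
  reflexivity proved by eqv_refl
  symmetry proved by eqv_sym
  transitivity proved by eqv_trans as eqv_rel.

Lemma N1 p : eqv (normp p) p.
Proof.
rewrite /normp /eqv; case: pselect => h /=.
- by rewrite -[in RHS](subM_spec h); ring.
- have h' : leM p.1 p.2 by case: (iii_i HM H3 p.1 p.2) => // h2; case: h.
  by rewrite -[in LHS](subM_spec h'); ring.
Qed.

Lemma N2 p q : isnorm p -> isnorm q -> eqv p q -> p = q.
Proof.
case: p => a b; case: q => c d; rewrite /isnorm /eqv /=.
case=> [->|->] [->|->] h.
- by rewrite (add0l HM) (add0 HM) in h; rewrite h.
- rewrite (add0 HM) in h; have h1 := sum0 (esym h).
  rewrite (addC HM) in h; have h2 := sum0 (esym h); by rewrite h1 h2.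
- rewrite (add0 HM) in h; have h1 := sum0 h.
  rewrite (addC HM) in h; have h2 := sum0 h; by rewrite h1 h2.
- by rewrite (add0l HM) (add0 HM) in h; rewrite h.
Qed.

Lemma K_eq (k l : K) : eqv (sval k) (sval l) -> k = l.
Proof.
case: k => p hp; case: l => q hq /= h.
have e := N2 hp hq h; subst q; congr exist; exact: Prop_irrelevance.
Qed.

Add Parametric Morphism : (@padd M) with signature
  (@eqv M) ==> (@eqv M) ==> (@eqv M) as padd_mor.
Proof.
move=> p p' hp q q' hq; move: hp hq; rewrite /eqv /padd /= => hp hq.
transitivity ((p.1 ⊕ p'.2) ⊕ (q.1 ⊕ q'.2)); first ring.
rewrite hp hq; ring.
Qed.

Lemma pmulC p q : pmul p q = pmul q p.
Proof. by rewrite /pmul; congr pair; ring. Qed.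

Lemma pmul_l p p' q : eqv p p' -> eqv (pmul p q) (pmul p' q).
Proof.
rewrite /eqv /pmul /= => h.
have e1 : p.1 ⊛ q.1 ⊕ p.2 ⊛ q.2 ⊕ (p'.1 ⊛ q.2 ⊕ p'.2 ⊛ q.1)
   = (p.1 ⊕ p'.2) ⊛ q.1 ⊕ (p.2 ⊕ p'.1) ⊛ q.2 by ring.
have e2 : p.1 ⊛ q.2 ⊕ p.2 ⊛ q.1 ⊕ (p'.1 ⊛ q.1 ⊕ p'.2 ⊛ q.2)
   = (p.2 ⊕ p'.1) ⊛ q.1 ⊕ (p.1 ⊕ p'.2) ⊛ q.2 by ring.
by rewrite e1 e2 h.
Qed.

Add Parametric Morphism : (@pmul M) with signature
  (@eqv M) ==> (@eqv M) ==> (@eqv M) as pmul_mor.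
Proof.
move=> p p' hp q q' hq.
apply: eqv_trans (pmul_l q hp) _.
rewrite (pmulC p' q) (pmulC p' q'); exact: pmul_l.
Qed.

Add Parametric Morphism : (@pswap M) with signature
  (@eqv M) ==> (@eqv M) as pswap_mor.
Proof. by move=> p q; rewrite /eqv /pswap /= => h; rewrite -h. Qed.

Lemma addKA : associative (@addK M H).
Proof.
move=> k l m; apply: K_eq; rewrite /= !N1.
by rewrite /eqv /padd /=; ring.
Qed.

Ltac kt := move=> *; apply: K_eq; rewrite /= ?N1; rewrite /eqv /padd /pmul /pswap /=; ring.

Lemma addKC : commutative (@addK M H). Proof. kt. Qed.
Lemma add0K : left_id (zeroK H) (@addK M H). Proof. kt. Qed.
Lemma addNK : left_inverse (zeroK H) (@oppK M H) (@addK M H). Proof. kt. Qed.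
Lemma mulKA : associative (@mulK M H). Proof. kt. Qed.
Lemma mulKC : commutative (@mulK M H). Proof. kt. Qed.
Lemma mul1K : left_id (oneK H) (@mulK M H). Proof. kt. Qed.
Lemma mulKDl : left_distributive (@mulK M H) (@addK M H). Proof. kt. Qed.

Lemma valfK x : sval (fK H x) = (x, O).
Proof. apply: N2; [exact: normp_isnorm | by right | exact: N1]. Qed.
Lemma fK_add x y : fK H (x ⊕ y) = addK (fK H x) (fK H y). Proof. kt. Qed.
Lemma fK_mul x y : fK H (x ⊛ y) = mulK (fK H x) (fK H y). Proof. kt. Qed.
Lemma fK_inj : injective (fK H).
Proof. by move=> x y /(congr1 sval); rewrite !valfK => -[]. Qed.
Lemma oneK_neq0 : oneK H <> zeroK H.
Proof.
move/(congr1 sval) => /=; move/(f_equal (fun p => p)) => h.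
have : eqv (I, O) (O, O).
  rewrite -[X in eqv X _]N1 -[X in eqv _ X]N1. by rewrite h; reflexivity.
rewrite /eqv /= (add0 HM) (add0 HM); exact: one_neq0 HM.
Qed.
End KLemmas.

HB.instance Definition _ (M : LStruct) (H : goodM M) := gen_eqMixin (Kt H).
HB.instance Definition _ (M : LStruct) (H : goodM M) := gen_choiceMixin (Kt H).
HB.instance Definition _ (M : LStruct) (H : goodM M) :=
  GRing.isZmodule.Build (Kt H) (@addKA M H) (@addKC M H) (@add0K M H) (@addNK M H).
Lemma oneK_neq0b (M : LStruct) (H : goodM M) : oneK H != zeroK H.
Proof. apply/eqP; exact: oneK_neq0. Qed.
HB.instance Definition _ (M : LStruct) (H : goodM M) :=
  GRing.Zmodule_isComNzRing.Build (Kt H) (@mulKA M H) (@mulKC M H) (@mul1K M H)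
    (@mulKDl M H) (oneK_neq0b H).


Section K2.
Variables (M : LStruct) (H : goodM M).
Local Notation K := (Kt H).
Let HM := proj1 H.
Let H3 := proj2 H.
Local Infix "⊕" := (add M) (at level 50, left associativity).
Local Infix "⊛" := (mul M) (at level 40, left associativity).
Local Notation "'O'" := (zeroL M).
Local Notation "'I'" := (oneL M).
Implicit Types x y z : M.
Implicit Types k l : K.

Lemma nozd x y : x ⊛ y = O -> x = O \/ y = O.
Proof.
move=> h; case: (H3 x) => hx; first by left.
right; have := A4 HM x y O; rewrite h (mul0 HM) (dxx HM) hx add0r subrr => h1.
apply/(dz HM); apply/eqP; rewrite eq_le h1; exact: dge0.
Qed.

Lemma valN k : sval (- k) = pswap (sval k). Proof. by []. Qed.

Lemma Kcases k : exists a, k = fK H a \/ k = - fK H a.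
Proof.
case: k => [[a b] hp]; case: hp => /= h; subst.
- exists b; right; apply: K_eq; rewrite valN valfK; exact: eqv_refl.
- exists a; left; apply: K_eq; rewrite valfK; exact: eqv_refl.
Qed.

Lemma fK0 : fK H O = 0. Proof. by []. Qed.
Lemma fK1 : fK H I = 1. Proof. by []. Qed.
Lemma fKD x y : fK H (x ⊕ y) = fK H x + fK H y. Proof. exact: fK_add. Qed.
Lemma fKM x y : fK H (x ⊛ y) = fK H x * fK H y. Proof. exact: fK_mul. Qed.

Lemma fK_eq0 x : fK H x = 0 -> x = O.
Proof. by rewrite -fK0 => /fK_inj. Qed.

Lemma Kidom (x y : K) : x * y = 0 -> (x == 0) || (y == 0).
Proof.
have [a [->|->]] := Kcases x; have [b [->|->]] := Kcases y;
  rewrite ?mulNr ?mulrN ?opprK -fKM => /eqP; rewrite ?oppr_eq0 => /eqP /fK_eq0 /nozd [] ->;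
  by rewrite fK0 ?oppr0 eqxx ?orbT.
Qed.

Definition unitK : {pred K} := fun k => `[< exists l : K, l * k = 1 >].
Definition invK (k : K) : K :=
  match pselect (exists l : K, l * k = 1) with
  | left h => proj1_sig (cid h)
  | right _ => k end.
Lemma mulVK : {in unitK, left_inverse 1 invK *%R}.
Proof.
move=> k; rewrite unfold_in => /asboolP h; rewrite /invK; case: pselect => // h'.
by case: (cid h').
Qed.
Lemma unitPlK (x y : K) : y * x = 1 -> unitK x.
Proof. by move=> h; apply/asboolP; exists y. Qed.
Lemma invK_out : {in [predC unitK], invK =1 id}.
Proof.
move=> k; rewrite inE /= unfold_in => /asboolP h; rewrite /invK; case: pselect => // h'.
Qed.
End K2.


HB.instance Definition _ (M : LStruct) (H : goodM M) :=
  GRing.ComNzRing_hasMulInverse.Build (Kt H) (@mulVK M H) (@unitPlK M H) (@invK_out M H).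
HB.instance Definition _ (M : LStruct) (H : goodM M) :=
  GRing.ComUnitRing_isIntegral.Build (Kt H) (@Kidom M H).

Section K3.
Variables (M : LStruct) (H : goodM M).
Local Notation K := (Kt H).
Let HM := proj1 H.
Let H3 := proj2 H.
Local Notation "'O'" := (zeroL M).
Implicit Types k l : K.

Definition nonnegK k : Prop := (sval k).2 = O.
Definition leK k l : bool := `[< nonnegK (l - k) >].
Definition ltK k l : bool := (l != k) && leK k l.
Definition normK k : K := if `[< nonnegK k >] then k else - k.

Lemma nonnegP k : nonnegK k <-> exists a, k = fK H a.
Proof.
split.
- case: k => [[a b] hp]; rewrite /nonnegK /= => hb; subst b; exists a.
  apply: K_eq; rewrite valfK; exact: eqv_refl.
- by case=> a ->; rewrite /nonnegK valfK.
Qed.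

Lemma le0K k : leK 0 k = `[< nonnegK k >].
Proof. by rewrite /leK subr0. Qed.

Lemma nonneg_oppfK a : nonnegK (- fK H a) <-> a = O.
Proof. by rewrite /nonnegK valN valfK. Qed.

Lemma le0_addK k l : leK 0 k -> leK 0 l -> leK 0 (k + l).
Proof.
rewrite !le0K => /asboolP/nonnegP[a ->] /asboolP/nonnegP[b ->].
by apply/asboolP/nonnegP; exists (add M a b); rewrite fKD.
Qed.
Lemma le0_mulK k l : leK 0 k -> leK 0 l -> leK 0 (k * l).
Proof.
rewrite !le0K => /asboolP/nonnegP[a ->] /asboolP/nonnegP[b ->].
by apply/asboolP/nonnegP; exists (mul M a b); rewrite fKM.
Qed.
Lemma le0_antiK k : leK 0 k -> leK k 0 -> k = 0.
Proof.
rewrite le0K => /asboolP/nonnegP[a ->]; rewrite /leK sub0r => /asboolP/nonneg_oppfK ->.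
by [].
Qed.
Lemma sub_ge0K k l : leK 0 (l - k) = leK k l.
Proof. by rewrite /leK subr0. Qed.
Lemma le0_totalK k : leK 0 k || leK k 0.
Proof.
rewrite le0K /leK sub0r; have [a [->|->]] := Kcases k.
- by apply/orP; left; apply/asboolP/nonnegP; exists a.
- by apply/orP; right; rewrite opprK; apply/asboolP/nonnegP; exists a.
Qed.
Lemma normNK k : normK (- k) = normK k.
Proof.
rewrite /normK; have [a [->|->]] := Kcases k; rewrite ?opprK.
- case: (pselect (a = O)) => [->|ha]; first by rewrite fK0 oppr0.
  have h1 : `[< nonnegK (- fK H a) >] = false.
    by apply/asboolP => /nonneg_oppfK.
  have h2 : `[< nonnegK (fK H a) >] = true by apply/asboolP/nonnegP; exists a.
  by rewrite h1 h2.
- case: (pselect (a = O)) => [->|ha]; first by rewrite fK0 oppr0.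
  have h1 : `[< nonnegK (- fK H a) >] = false.
    by apply/asboolP => /nonneg_oppfK.
  have h2 : `[< nonnegK (fK H a) >] = true by apply/asboolP/nonnegP; exists a.
  by rewrite h1 h2.
Qed.
Lemma ge0_normK k : leK 0 k -> normK k = k.
Proof. by rewrite le0K /normK => ->. Qed.
Lemma lt_defK k l : ltK k l = (l != k) && leK k l.
Proof. by []. Qed.
End K3.

HB.instance Definition _ (M : LStruct) (H : goodM M) :=
  Num.IntegralDomain_isLeReal.Build (Kt H) (@le0_addK M H) (@le0_mulK M H)
    (@le0_antiK M H) (@sub_ge0K M H) (@le0_totalK M H) (@normNK M H)
    (@ge0_normK M H) (@lt_defK M H).


Section Final.
Variables (M : LStruct) (HM : model_AA0 M).
Hypothesis H3 : forall x : M, x = zeroL M \/ absv x = 1.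
Let H : goodM M := conj HM H3.
Local Notation K := (Kt H).

Lemma leK_le (k l : K) : (k <= l) = leK k l.
Proof. by []. Qed.

Lemma fK_mono (x y : M) : leM x y -> fK H x <= fK H y.
Proof.
move=> hxy; rewrite leK_le /leK -(subM_spec H hxy) fKD [fK H x + _]addrC addrK.
by apply/asboolP/nonnegP; exists (subM x y).
Qed.

Lemma iii_iv : model_PAminus M.
Proof.
split; first by move=> x y hxy; apply: (Ddisc HM H3).
exists K, (fK H).
split; first exact: fK_inj.
split.
  move=> r; rewrite leK_le le0K => /asboolP/nonnegP[a ->]; by exists a.
split.
  move=> x; rewrite leK_le le0K; apply/asboolP/nonnegP; by exists x.
split; first by [].
split; first by [].
split; first exact: fKD.
split; first exact: fKM.
split.
  move=> x y; case: (iii_i HM H3 x y) => h.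
  - by rewrite h min_l //; apply: fK_mono.
  - by rewrite (meetC HM) h min_r //; apply: fK_mono.
split.
  move=> x y; case: (iii_i HM H3 x y) => h.
  - rewrite max_r; last exact: fK_mono.
    rewrite -{1}h (joinC HM) (meetC HM).
    congr (fK H _); exact: (joinM HM y x).
  - rewrite max_l; last exact: fK_mono.
    congr (fK H _); rewrite -h (meetC HM y x); exact: (joinM HM x y).
move=> r; rewrite lt_def => /andP[r0]; rewrite leK_le le0K => /asboolP/nonnegP[a ra].
subst r; rewrite -fK1; apply: fK_mono.
case: (iii_i HM H3 a (oneL M)) => // ha.
case: (pselect (a = oneL M)) => [->|ha1]; first exact: (meetI HM (oneL M)).
exfalso; apply: (iii_ii HM H3); exists a; split; split => //.
- exact: (le0 HM a).
- by move=> h0; move: r0; rewrite -h0 fK0 eqxx.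
Qed.
End Final.

Theorem mainTheorem2 (M : LStruct) (HM : model_AA0 M) :
  let i   := forall x y : M, leM x y \/ leM y x in
  let ii  := ~ (exists x : M, ltM (zeroL M) x /\ ltM x (oneL M)) in
  let iii := forall x : M, x = zeroL M \/ absv x = 1 in
  let iv  := model_PAminus M in
  [/\ (i <-> ii), (ii <-> iii) & (iii <-> iv)].
Proof.
cbv zeta; split; split.
- exact: i_ii HM.
- by move=> h; apply: iii_i HM (ii_iii HM h).
- exact: ii_iii HM.
- exact: iii_ii HM.
- exact: iii_iv HM.
- move=> h; exact: (ii_iii HM (i_ii HM (iv_i h))).
Qed.
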